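(* Let $\lambda>0$ and $\mu=\nu>0$, and equip $S^3$ with the generalised Berger metric $g$ described in the context. For $\theta\in(0,\pi/2)$ let $T^2_\theta\subset S^3$ be the torus $\{(\cos\theta\, e^{i\alpha},\sin\theta\, e^{i\beta}):\alpha,\beta\in\mathbb R\}$, and let $H_g$ be its mean curvature vector in $(S^3,g)$. Then for every real number $C\ge 0$ there exists $\theta\in(0,\pi/2)$ such that the mean curvature of $T^2_\theta$ is constant with $\|H_g\|\equiv C$. For $C=0$ such a torus in this family is unique, and for $C>0$ there exist exactly two such tori in this family.
   Context: $S^3=\{(z,w)\in\mathbb C^2: |z|^2+|w|^2=1\}$ is a Lie group with multiplication $(z_1,w_1)\cdot(z_2,w_2)=(z_1z_2-\bar w_1w_2,\ \bar z_1w_2+w_1z_2)$ and inverse $(z,w)^{-1}=(\bar z,-w)$; the same formula defines $p\cdot v$ for $v\in\mathbb C^2$. Let $\langle (z_1,w_1),(z_2,w_2)\rangle=\mathrm{Re}(z_1\bar z_2+w_1\bar w_2)$. For $\lambda,\mu,\nu>0$ the left-invariant Riemannian metric $g$ is $g_p(A,B)=\lambda^2\langle p^{-1}A,(i,0)\rangle\langle p^{-1}B,(i,0)\rangle+\mu^2\langle p^{-1}A,(0,-1)\rangle\langle p^{-1}B,(0,-1)\rangle+\nu^2\langle p^{-1}A,(0,i)\rangle\langle p^{-1}B,(0,i)\rangle+\langle p^{-1}A,(1,0)\rangle\langle p^{-1}B,(1,0)\rangle$ for $A,B\in T_pS^3$. For a surface $T$ in $(S^3,g)$ with $g$-orthonormal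 tangent basis $V_1,V_2$ at $p$, the mean curvature vector is $H_g=\tfrac12(B(V_1,V_1)+B(V_2,V_2))$, where $B$ is the second fundamental form (normal component of the covariant derivative), and $\|H_g\|=\sqrt{g(H_g,H_g)}$. *)

(* Defs.v *)
From Stdlib Require Import Reals.
From Coquelicot Require Import Coquelicot.
Open Scope R_scope.

Definition C2 := (C * C)%type.

Definition c2mul (p q : C2) : C2 :=
  let (z1, w1) := p in let (z2, w2) := q in
  (Cminus (Cmult z1 z2) (Cmult (Cconj w1) w2),
   Cplus (Cmult (Cconj z1) w2) (Cmult w1 z2)).

Definition c2inv (p : C2) : C2 := let (z, w) := p in (Cconj z, Copp w).

Definition c2ip (p q : C2) : R :=
  let (z1, w1) := p in let (z2, w2) := q in
  Re (Cplus (Cmult z1 (Cconj z2)) (Cmult w1 (Cconj w2))).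

Definition eI  : C2 := (Ci, RtoC 0).
Definition eJ  : C2 := (RtoC 0, RtoC (-1)).
Definition eK  : C2 := (RtoC 0, Ci).
Definition e1C : C2 := (RtoC 1, RtoC 0).

Definition gmet (lam mu nu : R) (p A B : C2) : R :=
  let a := c2mul (c2inv p) A in let b := c2mul (c2inv p) B in
  lam ^ 2 * c2ip a eI * c2ip b eI
  + mu ^ 2 * c2ip a eJ * c2ip b eJ
  + nu ^ 2 * c2ip a eK * c2ip b eK
  + c2ip a e1C * c2ip b e1C.

(** Local coordinates (theta, alpha, beta) on S^3 (Hopf coordinates):
    phi(theta,alpha,beta) = (cos theta e^{i alpha}, sin theta e^{i beta}).
    The torus T^2_theta is the coordinate surface {theta = const}. *)
Inductive crd : Type := Cth | Cal | Cbe.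
Definition crds : list crd := Cth :: Cal :: Cbe :: nil.
Definition crd_eqb (i j : crd) : bool :=
  match i, j with
  | Cth, Cth | Cal, Cal | Cbe, Cbe => true
  | _, _ => false
  end.

Definition vec := crd -> R.
Definition upd (x : vec) (i : crd) (s : R) : vec :=
  fun j => if crd_eqb i j then s else x j.
Definition mkpt (th al be : R) : vec :=
  fun j => match j with Cth => th | Cal => al | Cbe => be end.

Definition pd (f : vec -> R) (i : crd) (x : vec) : R :=
  Derive (fun s => f (upd x i s)) (x i).

Definition sum3 (f : crd -> R) : R := f Cth + f Cal + f Cbe.

Definition chart (x : vec) : C2 :=
  ((cos (x Cth) * cos (x Cal), cos (x Cth) * sin (x Cal)),
   (sin (x Cth) * cos (x Cbe), sin (x Cth) * sin (x Cbe))).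

Definition dchart (i : crd) (x : vec) : C2 :=
  ((pd (fun y => fst (fst (chart y))) i x, pd (fun y => snd (fst (chart y))) i x),
   (pd (fun y => fst (snd (chart y))) i x, pd (fun y => snd (snd (chart y))) i x)).

Section Geo.
Variables lam mu nu : R.

Definition gij (x : vec) (i j : crd) : R :=
  gmet lam mu nu (chart x) (dchart i x) (dchart j x).

Definition gc (x : vec) (v w : vec) : R :=
  sum3 (fun i => sum3 (fun j => v i * w j * gij x i j)).

(** Christoffel symbols of the first kind of the Levi-Civita connection:
    Gam x i j l = g(nabla_{d_i} d_j, d_l). *)
Definition Gam (x : vec) (i j l : crd) : R :=
  / 2 * (pd (fun y => gij y j l) i x + pd (fun y => gij y i l) j x
         - pd (fun y => gij y i j) l x).

Definition gnabla (x : vec) (v n : vec) : R :=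
  sum3 (fun i => sum3 (fun j => sum3 (fun l => v i * v j * n l * Gam x i j l))).

(** Mean curvature vector (coordinate coefficients) of the surface {theta = const}
    at x, from a g-orthonormal tangent basis v1, v2 and a unit normal n:
    H = 1/2 (B(V1,V1) + B(V2,V2)), B(V,V) = normal component of nabla_V V
    = g(nabla_V V, N) N. *)
Definition Hvec (x : vec) (v1 v2 n : vec) : vec :=
  fun l => / 2 * (gnabla x v1 n + gnabla x v2 n) * n l.

Definition Hnorm (x : vec) (v1 v2 n : vec) : R :=
  sqrt (gc x (Hvec x v1 v2 n) (Hvec x v1 v2 n)).

Definition torus_cmc (th Cst : R) : Prop :=
  forall al be : R, forall v1 v2 n : vec,
    let x := mkpt th al be in
    v1 Cth = 0 -> v2 Cth = 0 ->
    gc x v1 v1 = 1 -> gc x v2 v2 = 1 -> gc x v1 v2 = 0 ->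
    gc x n v1 = 0 -> gc x n v2 = 0 -> gc x n n = 1 ->
    Hnorm x v1 v2 n = Cst.

End Geo.

(* Main.v *)
Require Import Defs.
From Stdlib Require Import Reals Lra Nsatz.
From Coquelicot Require Import Coquelicot.
Open Scope R_scope.

Lemma dchart_th y : dchart Cth y = ((- sin (y Cth) * cos (y Cal), - sin (y Cth) * sin (y Cal)), (cos (y Cth) * cos (y Cbe), cos (y Cth) * sin (y Cbe))).
Proof. unfold dchart, pd, chart, upd; simpl.
repeat f_equal; apply is_derive_unique; auto_derive; auto; ring. Qed.
Lemma dchart_al y : dchart Cal y = ((- cos (y Cth) * sin (y Cal), cos (y Cth) * cos (y Cal)), (0, 0)).
Proof. unfold dchart, pd, chart, upd; simpl.
repeat f_equal; apply is_derive_unique; auto_derive; auto; ring. Qed.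
Lemma dchart_be y : dchart Cbe y = ((0, 0), (- sin (y Cth) * sin (y Cbe), sin (y Cth) * cos (y Cbe))).
Proof. unfold dchart, pd, chart, upd; simpl.
repeat f_equal; apply is_derive_unique; auto_derive; auto; ring. Qed.

Definition Gf (lam mu : R) (i j : crd) (t : R) : R :=
  let c := cos t in let s := sin t in
  match i, j with
  | Cth, Cth => mu ^ 2
  | Cal, Cal => lam^2 * c^4 + mu^2 * s^2 * c^2
  | Cbe, Cbe => lam^2 * s^4 + mu^2 * c^2 * s^2
  | Cal, Cbe | Cbe, Cal => (lam^2 - mu^2) * c^2 * s^2
  | _, _ => 0
  end.

Lemma gij_eq lam mu y i j : gij lam mu mu y i j = Gf lam mu i j (y Cth).
Proof.
  unfold gij.
  assert (E1 := sin2_cos2 (y Cth)); unfold Rsqr in E1.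
  assert (E2 := sin2_cos2 (y Cal)); unfold Rsqr in E2.
  assert (E3 := sin2_cos2 (y Cbe)); unfold Rsqr in E3.
  destruct i, j; rewrite ?dchart_th, ?dchart_al, ?dchart_be;
  unfold gmet, chart, c2mul, c2inv, c2ip, eI, eJ, eK, e1C, Gf, Cconj, Cmult, Cplus, Cminus, Copp, RtoC, Ci, Re; simpl;
  nsatz.
Qed.

Lemma pd_gij lam mu y i j k : pd (fun y => gij lam mu mu y i j) k y =
  match k with Cth => Derive (Gf lam mu i j) (y Cth) | _ => 0 end.
Proof.
  unfold pd. destruct k.
  - apply Derive_ext. intro t. rewrite gij_eq. reflexivity.
  - rewrite (Derive_ext _ (fun _ => Gf lam mu i j (y Cth))). apply Derive_const.
    intro t. rewrite gij_eq. reflexivity.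
  - rewrite (Derive_ext _ (fun _ => Gf lam mu i j (y Cth))). apply Derive_const.
    intro t. rewrite gij_eq. reflexivity.
Qed.

Lemma dGf_aa lam mu t : Derive (Gf lam mu Cal Cal) t =
  lam^2 * (4 * cos t ^ 3 * (- sin t)) + mu^2 * (2 * sin t * cos t * cos t ^2 + sin t ^2 * (2 * cos t * (- sin t))).
Proof. apply is_derive_unique. unfold Gf. auto_derive; auto; ring. Qed.
Lemma dGf_bb lam mu t : Derive (Gf lam mu Cbe Cbe) t =
  lam^2 * (4 * sin t ^ 3 * cos t) + mu^2 * (2 * cos t * (- sin t) * sin t ^2 + cos t ^2 * (2 * sin t * cos t)).
Proof. apply is_derive_unique. unfold Gf. auto_derive; auto; ring. Qed.
Lemma dGf_ab lam mu t : Derive (Gf lam mu Cal Cbe) t =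
  (lam^2 - mu^2) * (2 * cos t * (- sin t) * sin t ^2 + cos t ^2 * (2 * sin t * cos t)).
Proof. apply is_derive_unique. unfold Gf. auto_derive; auto; ring. Qed.
Lemma dGf_ba lam mu t : Derive (Gf lam mu Cbe Cal) t =
  (lam^2 - mu^2) * (2 * cos t * (- sin t) * sin t ^2 + cos t ^2 * (2 * sin t * cos t)).
Proof. apply is_derive_unique. unfold Gf. auto_derive; auto; ring. Qed.

Lemma gnabla_eq lam mu y v n : v Cth = 0 -> n Cal = 0 -> n Cbe = 0 ->
  gnabla lam mu mu y v n = n Cth * (- / 2) *
   (v Cal * v Cal * Derive (Gf lam mu Cal Cal) (y Cth)
    + 2 * v Cal * v Cbe * Derive (Gf lam mu Cal Cbe) (y Cth)
    + v Cbe * v Cbe * Derive (Gf lam mu Cbe Cbe) (y Cth)).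
Proof.
  intros H1 H2 H3. unfold gnabla, sum3, Gam. rewrite !pd_gij, H1, H2, H3.
  rewrite (dGf_ba lam mu), (dGf_ab lam mu). ring.
Qed.

Lemma gc_eq lam mu th al be v w : gc lam mu mu (mkpt th al be) v w =
  v Cth * w Cth * mu^2 + v Cal * w Cal * Gf lam mu Cal Cal th
  + (v Cal * w Cbe + v Cbe * w Cal) * Gf lam mu Cal Cbe th
  + v Cbe * w Cbe * Gf lam mu Cbe Cbe th
  + (v Cth * w Cal + v Cal * w Cth + v Cth * w Cbe + v Cbe * w Cth) * 0.
Proof. unfold gc, sum3. rewrite !gij_eq. simpl. ring. Qed.

Lemma alg1 a b d p1 q1 p2 q2 :
  p1*p1*a + p1*q1*b + q1*p1*b + q1*q1*d = 1 ->
  p2*p2*a + p2*q2*b + q2*p2*b + q2*q2*d = 1 ->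
  p1*p2*a + p1*q2*b + q1*p2*b + q1*q2*d = 0 ->
  (p1*p1+p2*p2)*(a*d-b*b) = d /\ (p1*q1+p2*q2)*(a*d-b*b) = -b /\ (q1*q1+q2*q2)*(a*d-b*b) = a.
Proof. intros H1 H2 H3. split; [|split]; nsatz. Qed.

Lemma trig_id lam mu th :
  Gf lam mu Cbe Cbe th * Derive (Gf lam mu Cal Cal) th + 2 * - Gf lam mu Cal Cbe th * Derive (Gf lam mu Cal Cbe) th
  + Gf lam mu Cal Cal th * Derive (Gf lam mu Cbe Cbe) th = 2 * lam^2 * mu^2 * cos th * sin th * (cos th ^2 - sin th ^2).
Proof.
  rewrite dGf_aa, dGf_ab, dGf_bb. assert (E := sin2_cos2 th); unfold Rsqr in E. simpl. nsatz.
Qed.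

Lemma Hnorm_eq lam mu th al be v1 v2 n : 0 < lam -> 0 < mu -> 0 < th < PI/2 ->
    let x := mkpt th al be in
    v1 Cth = 0 -> v2 Cth = 0 ->
    gc lam mu mu x v1 v1 = 1 -> gc lam mu mu x v2 v2 = 1 -> gc lam mu mu x v1 v2 = 0 ->
    gc lam mu mu x n v1 = 0 -> gc lam mu mu x n v2 = 0 -> gc lam mu mu x n n = 1 ->
    Hnorm lam mu mu x v1 v2 n = Rabs (cos th ^ 2 - sin th ^ 2) / (2 * mu * cos th * sin th).
Proof.
  intros Hl Hm Hth x H1 H2 G11 G22 G12 N1 N2 NN.
  unfold x in *. rewrite !gc_eq in G11, G22, G12, N1, N2, NN.
  rewrite H1, H2 in *.
  assert (Hc : 0 < cos th) by (apply cos_gt_0; lra).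
  assert (Hs : 0 < sin th) by (apply sin_gt_0; lra).
  assert (E := sin2_cos2 th); unfold Rsqr in E.
  assert (HD : Gf lam mu Cal Cal th * Gf lam mu Cbe Cbe th - Gf lam mu Cal Cbe th * Gf lam mu Cal Cbe th
     = lam^2 * mu^2 * cos th ^2 * sin th ^2) by (simpl; nsatz).
  assert (HDp : 0 < lam^2 * mu^2 * cos th ^2 * sin th ^2).
  { assert (0 < cos th * sin th) by (apply Rmult_lt_0_compat; lra).
    assert (0 < lam * mu) by (apply Rmult_lt_0_compat; lra).
    replace (lam^2 * mu^2 * cos th ^2 * sin th ^2) with ((lam*mu*(cos th * sin th))^2) by ring.
    apply pow_lt. apply Rmult_lt_0_compat; lra. }
  set (A := Gf lam mu Cal Cal th) in *.
  set (B := Gf lam mu Cal Cbe th) in *.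
  set (D := Gf lam mu Cbe Cbe th) in *.
  destruct (alg1 A B D (v1 Cal) (v1 Cbe) (v2 Cal) (v2 Cbe) ltac:(lra) ltac:(lra) ltac:(lra)) as [M1 [M2 M3]].
  set (w1 := n Cal * A + n Cbe * B). set (w2 := n Cal * B + n Cbe * D).
  assert (W1 : v1 Cal * w1 + v1 Cbe * w2 = 0) by (unfold w1, w2; lra).
  assert (W2 : v2 Cal * w1 + v2 Cbe * w2 = 0) by (unfold w1, w2; lra).
  assert (Na : n Cal * (A * D - B * B) = 0).
  { transitivity ((v1 Cal * v1 Cal + v2 Cal * v2 Cal) * (A * D - B * B) * w1
       + (v1 Cal * v1 Cbe + v2 Cal * v2 Cbe) * (A * D - B * B) * w2).
    rewrite M1, M2; unfold w1, w2; ring.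
    transitivity ((A * D - B * B) * (v1 Cal * (v1 Cal * w1 + v1 Cbe * w2) + v2 Cal * (v2 Cal * w1 + v2 Cbe * w2))).
    ring. rewrite W1, W2; ring. }
  assert (Nb : n Cbe * (A * D - B * B) = 0).
  { transitivity ((v1 Cal * v1 Cbe + v2 Cal * v2 Cbe) * (A * D - B * B) * w1
       + (v1 Cbe * v1 Cbe + v2 Cbe * v2 Cbe) * (A * D - B * B) * w2).
    rewrite M2, M3; unfold w1, w2; ring.
    transitivity ((A * D - B * B) * (v1 Cbe * (v1 Cal * w1 + v1 Cbe * w2) + v2 Cbe * (v2 Cal * w1 + v2 Cbe * w2))).
    ring. rewrite W1, W2; ring. }
  assert (Na0 : n Cal = 0) by (rewrite HD in Na; apply Rmult_integral in Na; destruct Na; lra).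
  assert (Nb0 : n Cbe = 0) by (rewrite HD in Nb; apply Rmult_integral in Nb; destruct Nb; lra).
  rewrite Na0, Nb0 in NN.
  assert (Nt : n Cth ^ 2 * mu ^ 2 = 1) by lra.
  unfold Hnorm. rewrite gc_eq. unfold Hvec. rewrite Na0, Nb0.
  rewrite !gnabla_eq; auto. simpl (mkpt th al be Cth).
  set (S := v1 Cal * v1 Cal * Derive (Gf lam mu Cal Cal) th +
    2 * v1 Cal * v1 Cbe * Derive (Gf lam mu Cal Cbe) th +
    v1 Cbe * v1 Cbe * Derive (Gf lam mu Cbe Cbe) th
    + (v2 Cal * v2 Cal * Derive (Gf lam mu Cal Cal) th +
    2 * v2 Cal * v2 Cbe * Derive (Gf lam mu Cal Cbe) th +
    v2 Cbe * v2 Cbe * Derive (Gf lam mu Cbe Cbe) th)).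
  assert (SD : S * (lam^2 * mu^2 * cos th ^2 * sin th ^2) = 2 * lam^2 * mu^2 * cos th * sin th * (cos th ^2 - sin th ^2)).
  { rewrite <- HD.
    transitivity ((v1 Cal * v1 Cal + v2 Cal * v2 Cal) * (A * D - B * B) * Derive (Gf lam mu Cal Cal) th
      + 2 * ((v1 Cal * v1 Cbe + v2 Cal * v2 Cbe) * (A * D - B * B)) * Derive (Gf lam mu Cal Cbe) th
      + (v1 Cbe * v1 Cbe + v2 Cbe * v2 Cbe) * (A * D - B * B) * Derive (Gf lam mu Cbe Cbe) th).
    unfold S; ring. rewrite M1, M2, M3. rewrite <- trig_id. fold A B D. ring. }
  assert (SV : S = 2 * (cos th ^2 - sin th ^2) / (cos th * sin th)).
  { apply (Rmult_eq_reg_r (lam^2 * mu^2 * cos th ^2 * sin th ^2)); [|lra].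
    rewrite SD. field. lra. }
  match goal with |- sqrt ?e = _ => replace e with ((Rabs (cos th ^ 2 - sin th ^ 2) / (2 * mu * cos th * sin th))^2) end.
  - apply sqrt_pow2. apply Rmult_le_pos. apply Rabs_pos. left. apply Rinv_0_lt_compat.
    repeat apply Rmult_lt_0_compat; lra.
  - unfold Rdiv; rewrite Rpow_mult_distr, pow2_abs.
    transitivity ((n Cth ^2 * mu^2) * (n Cth ^ 2 * (S / 4)^2)); [| unfold S; field].
    assert (Nt2 : n Cth ^ 2 = / mu ^ 2) by (replace (n Cth ^2) with (n Cth^2 * mu^2 / mu^2) by (field; lra); rewrite Nt; field; lra).
    rewrite Nt, Nt2, SV. field. repeat split; lra.
Qed.

Lemma F_tan mu th : 0 < mu -> 0 < th < PI/2 ->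
  Rabs (cos th ^ 2 - sin th ^ 2) / (2 * mu * cos th * sin th) = Rabs (tan (2*th - PI/2)) / mu.
Proof.
  intros Hm Hth. assert (HP := PI_RGT_0).
  assert (Hc2 : cos (2*th - PI/2) = sin (2*th)) by (rewrite cos_minus, cos_PI2, sin_PI2; ring).
  assert (Hs2 : sin (2*th - PI/2) = - cos (2*th)) by (rewrite sin_minus, cos_PI2, sin_PI2; ring).
  assert (Hcp : 0 < cos (2*th - PI/2)) by (apply cos_gt_0; lra).
  set (p := 2*th - PI/2) in *.
  unfold tan, Rdiv. rewrite Rabs_mult, Rabs_inv. rewrite (Rabs_right (cos p)) by lra.
  rewrite Hs2, Rabs_Ropp. rewrite Hc2 in *. rewrite cos_2a, sin_2a in *.
  replace (cos th ^ 2 - sin th ^ 2) with (cos th * cos th - sin th * sin th) by ring.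
  assert (0 < cos th) by (apply cos_gt_0; lra). assert (0 < sin th) by (apply sin_gt_0; lra).
  field. repeat split; lra.
Qed.

Lemma cmc_iff lam mu th C : 0 < lam -> 0 < mu -> 0 < th < PI/2 ->
  (torus_cmc lam mu mu th C <-> Rabs (tan (2*th - PI/2)) / mu = C).
Proof.
  intros Hl Hm Hth. rewrite <- F_tan by auto.
  assert (Hc : 0 < cos th) by (apply cos_gt_0; lra).
  assert (Hs : 0 < sin th) by (apply sin_gt_0; lra).
  assert (E := sin2_cos2 th); unfold Rsqr in E.
  split.
  - intro H.
    set (v1 := mkpt 0 (/lam) (/lam)).
    set (v2 := mkpt 0 (sin th / (mu * cos th)) (- cos th / (mu * sin th))).
    set (n := mkpt (/ mu) 0 0).
    assert (G11 : gc lam mu mu (mkpt th 0 0) v1 v1 = 1) by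
      (rewrite gc_eq; simpl; field_simplify_eq; [clear - E; simpl; nsatz | repeat split; lra]).
    assert (G22 : gc lam mu mu (mkpt th 0 0) v2 v2 = 1) by
      (rewrite gc_eq; simpl; field_simplify_eq; [clear - E; simpl; nsatz | repeat split; lra]).
    assert (G12 : gc lam mu mu (mkpt th 0 0) v1 v2 = 0) by
      (rewrite gc_eq; simpl; field_simplify_eq; [clear - E; simpl; nsatz | repeat split; lra]).
    assert (N1 : gc lam mu mu (mkpt th 0 0) n v1 = 0) by
      (rewrite gc_eq; simpl; field_simplify_eq; [clear - E; simpl; nsatz | repeat split; lra]).
    assert (N2 : gc lam mu mu (mkpt th 0 0) n v2 = 0) by
      (rewrite gc_eq; simpl; field_simplify_eq; [clear - E; simpl; nsatz | repeat split; lra]).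
    assert (NN : gc lam mu mu (mkpt th 0 0) n n = 1) by
      (rewrite gc_eq; simpl; field_simplify_eq; [clear - E; simpl; nsatz | repeat split; lra]).
    rewrite <- (H 0 0 v1 v2 n eq_refl eq_refl G11 G22 G12 N1 N2 NN).
    symmetry. apply Hnorm_eq; auto.
  - intros H al be v1 v2 n x H1 H2 G11 G22 G12 N1 N2 NN.
    rewrite <- H. apply Hnorm_eq; auto.
Qed.

Theorem mainTheorem3 :
  forall lam mu nu : R, 0 < lam -> 0 < mu -> 0 < nu -> mu = nu ->
  forall Cst : R, 0 <= Cst ->
    (exists th, 0 < th < PI / 2 /\ torus_cmc lam mu nu th Cst) /\
    (Cst = 0 ->
       forall th1 th2, 0 < th1 < PI / 2 -> 0 < th2 < PI / 2 ->
         torus_cmc lam mu nu th1 Cst -> torus_cmc lam mu nu th2 Cst -> th1 = th2) /\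
    (0 < Cst ->
       exists th1 th2,
         0 < th1 < PI / 2 /\ 0 < th2 < PI / 2 /\ th1 <> th2 /\
         torus_cmc lam mu nu th1 Cst /\ torus_cmc lam mu nu th2 Cst /\
         forall th, 0 < th < PI / 2 -> torus_cmc lam mu nu th Cst ->
           th = th1 \/ th = th2).
Proof.
  intros lam mu nu Hl Hm Hn Hmn C HC. subst nu.
  assert (HP := PI_RGT_0).
  assert (HCm : 0 <= C * mu) by (apply Rmult_le_pos; lra).
  set (a := atan (C * mu)).
  assert (Ha : 0 <= a < PI / 2).
  { destruct (atan_bound (C * mu)). split; [|unfold a; lra].
    destruct (Req_dec (C * mu) 0) as [E|E].
    - unfold a; rewrite E, atan_0; lra.
    - left. rewrite <- atan_0. apply atan_increasing. lra. }
  assert (sol : forall th, 0 < th < PI / 2 -> torus_cmc lam mu mu th C ->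
                th = PI/4 - a/2 \/ th = PI/4 + a/2).
  { intros th Hth H. apply (cmc_iff lam mu th C Hl Hm Hth) in H.
    set (p := 2 * th - PI / 2) in *.
    assert (Hp : - (PI/2) < p < PI/2) by (unfold p; lra).
    assert (Ht : Rabs (tan p) = C * mu) by (rewrite <- H; field; lra).
    destruct (Rcase_abs (tan p)) as [Hneg|Hpos].
    - rewrite Rabs_left in Ht by lra.
      assert (p = - a).
      { rewrite <- (atan_tan p Hp). unfold a. rewrite <- atan_opp. f_equal. lra. }
      left. unfold p in *. lra.
    - rewrite Rabs_right in Ht by lra.
      assert (p = a).
      { rewrite <- (atan_tan p Hp). unfold a. f_equal. lra. }
      right. unfold p in *. lra. }
  assert (R1 : 0 < PI/4 - a/2 < PI/2) by lra.
  assert (R2 : 0 < PI/4 + a/2 < PI/2) by lra.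
  assert (V1 : torus_cmc lam mu mu (PI/4 - a/2) C).
  { apply cmc_iff; auto.
    replace (2 * (PI/4 - a/2) - PI/2) with (- a) by field.
    rewrite tan_neg, Rabs_Ropp. unfold a. rewrite tan_atan, Rabs_pos_eq by lra. field. lra. }
  assert (V2 : torus_cmc lam mu mu (PI/4 + a/2) C).
  { apply cmc_iff; auto.
    replace (2 * (PI/4 + a/2) - PI/2) with a by field.
    unfold a. rewrite tan_atan, Rabs_pos_eq by lra. field. lra. }
  split; [|split].
  - exists (PI/4 - a/2). auto.
  - intros HC0 th1 th2 H1 H2 T1 T2.
    assert (a = 0) by (unfold a; rewrite HC0, Rmult_0_l; apply atan_0).
    destruct (sol th1 H1 T1), (sol th2 H2 T2); lra.
  - intros HCp.
    assert (0 < a).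
    { unfold a. rewrite <- atan_0. apply atan_increasing. apply Rmult_lt_0_compat; lra. }
    exists (PI/4 - a/2), (PI/4 + a/2).
    repeat split; try lra; auto.
Qed.
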